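(* For every integer $N\ge 3$, the number of tuples $(\mu_1,\mu_2;d_1,d_2)\in P^2\times\mathbb Z^2$ with $d_1+d_2$ odd and $$2|\mu_1|+22|\mu_2|+2\binom{d_1}{2}+22\binom{d_2}{2}+d_1+11d_2=N$$ equals the number of tuples $(\alpha_1,\alpha_2;e_1,e_2)\in P^2\times\mathbb Z^2$ with $e_1+e_2$ odd and $$2|\alpha_1|+22|\alpha_2|+2\binom{e_1}{2}+22\binom{e_2}{2}+3=N.$$
   Context: $P$ denotes the set of all integer partitions into positive parts (including the empty partition); for a partition $\lambda$, $|\lambda|$ is the sum of its parts. For $d\in\mathbb Z$, $\binom{d}{2}=d(d-1)/2$. *)

(* Defs.v *)
From HB Require Import structures.
From mathcomp Require Import all_boot all_order all_algebra.
Set Implicit Arguments. Unset Strict Implicit. Unset Printing Implicit Defensive.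
Import Order.TTheory GRing.Theory Num.Theory.

Definition is_partition (s : seq nat) : bool :=
  sorted geq s && all (fun x => 0 < x)%N s.

Definition psize (s : seq nat) : nat := sumn s.

Definition binom2 (d : int) : int := ((d * (d - 1)) %/ 2)%Z.

Local Open Scope ring_scope.

Definition LHS_set (N : int) (x : seq nat * seq nat * int * int) : Prop :=
  let: (mu1, mu2, d1, d2) := x in
  [/\ is_partition mu1, is_partition mu2, ~~ (2 %| d1 + d2)%Z &
      2 * (psize mu1)%:Z + 22 * (psize mu2)%:Z + 2 * binom2 d1
        + 22 * binom2 d2 + d1 + 11 * d2 = N].

Definition RHS_set (N : int) (x : seq nat * seq nat * int * int) : Prop :=
  let: (a1, a2, e1, e2) := x in
  [/\ is_partition a1, is_partition a2, ~~ (2 %| e1 + e2)%Z &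
      2 * (psize a1)%:Z + 22 * (psize a2)%:Z + 2 * binom2 e1
        + 22 * binom2 e2 + 3 = N].

(* Main.v *)
Require Import Defs.
From HB Require Import structures.
From mathcomp Require Import all_boot all_order all_algebra.
Import Order.TTheory GRing.Theory Num.Theory.
From mathcomp Require Import zify ring lra.
From Stdlib Require Import ProofIrrelevance.
Local Open Scope ring_scope.
Local Open Scope ring_scope.

Lemma le_sq (x : int) : -(x^+2) <= x <= x^+2.
Proof. rewrite expr2; case: (lerP 0 x) => h; apply/andP; split; nia. Qed.

Definition zr (R : nat) : seq int := [seq (i%:Z - R%:Z) | i <- iota 0 (R + R).+1].

Lemma mem_zr R x : (x \in zr R) = (- (R%:Z) <= x <= R%:Z).
Proof.
apply/mapP/idP.
  by move=> [i]; rewrite mem_iota => /andP[_ hi] ->; apply/andP; split; lia.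
move=> /andP[h1 h2]; exists (absz (x + R%:Z)); last by lia.
rewrite mem_iota; apply/andP; split; lia.
Qed.

Lemma uniq_zr R : uniq (zr R).
Proof. rewrite map_inj_uniq ?iota_uniq // => i j; lia. Qed.

Definition box2 (R : nat) : seq (int * int) := [seq (x, y) | x <- zr R, y <- zr R].

Lemma mem_box2 R z : (z \in box2 R) =
  [&& - (R%:Z) <= z.1 <= R%:Z & - (R%:Z) <= z.2 <= R%:Z].
Proof.
apply/allpairsP/idP.
  by move=> [[x y] [/= hx hy ->]]; rewrite /= -!mem_zr hx hy.
case: z => x y /andP[hx hy]; exists (x, y); rewrite /= !mem_zr hx hy //.
Qed.

Lemma uniq_box2 R : uniq (box2 R).
Proof. by apply: allpairs_uniq; rewrite ?uniq_zr // => [[a b] [c d]] _ _. Qed.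

Lemma count_bij (T1 T2 : eqType) (s1 : seq T1) (s2 : seq T2)
  (P : pred T1) (Q : pred T2) (f : T1 -> T2) (g : T2 -> T1) :
  uniq s1 -> uniq s2 ->
  (forall x, x \in s1 -> P x -> [/\ f x \in s2, Q (f x) & g (f x) = x]) ->
  (forall y, y \in s2 -> Q y -> [/\ g y \in s1, P (g y) & f (g y) = y]) ->
  count P s1 = count Q s2.
Proof.
move=> u1 u2 hf hg; rewrite -!size_filter.
have <- : size [seq f x | x <- filter P s1] = size (filter Q s2); last by rewrite size_map.
apply: perm_size; apply: uniq_perm.
- rewrite map_inj_in_uniq ?filter_uniq // => x y.
  rewrite !mem_filter => /andP[px xs] /andP[py ys] e.
  by case: (hf x xs px) => _ _ <-; case: (hf y ys py) => _ _ <-; rewrite e.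
- exact: filter_uniq.
move=> y; apply/mapP/idP.
  move=> [x]; rewrite mem_filter => /andP[px xs] ->.
  by case: (hf x xs px) => a b _; rewrite mem_filter a b.
rewrite mem_filter => /andP[qy ys]; case: (hg y ys qy) => a b c.
by exists (g y); rewrite // mem_filter a b.
Qed.

Local Open Scope ring_scope.

Lemma le_sq' (x : int) : `|x| <= x * x.
Proof. case: (lerP 0 x) => h; nia. Qed.
Lemma le_om (x : int) : `|x| <= x * (3 * x + 1).
Proof. case: (lerP 0 x) => h; nia. Qed.
Lemma le_e (x : int) : 0 <= x * (x - 1) /\ `|x| <= x * (x - 1) + 1.
Proof. case: (lerP 0 x) => h; split; nia. Qed.

Definition oddz (x : int) : bool := ~~ (2 %| x)%Z.

Definition nA (z : int * int) := z.1 * z.1 + 11 * (z.2 * z.2).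
Definition cA R k := count (fun z => (nA z == k) && oddz (z.1 + z.2)) (box2 R).
Definition cAr R k r := count (fun z => (nA z == k) && ((z.1 + z.2) %% 6 == r)%Z) (box2 R).
Definition cB R k := count (fun z => (z.1 * (z.1 - 1) + 11 * (z.2 * (z.2 - 1)) + 3 == k)
   && oddz (z.1 + z.2)) (box2 R).
Definition cB' R k := count (fun z => (nA z == 4 * k) && oddz z.2 && ((z.1 + z.2) %% 4 == 2)%Z) (box2 R).
Definition cC R k r := count (fun z => (nA z == 4 * k) && oddz z.2 && ((z.1 + z.2) %% 12 == r)%Z) (box2 R).
Definition om (a : int) := a * (3 * a + 1).
Definition nS (z : int * int) := om z.1 + 11 * om z.2.
Definition cSe R j := count (fun z => (nS z == j) && ~~ oddz (z.1 + z.2)) (box2 R).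
Definition cSo R j := count (fun z => (nS z == j) && oddz (z.1 + z.2)) (box2 R).

Lemma count_sum3 (T : eqType) (s : seq T) (P P1 P2 P3 : pred T) :
  (forall x, (P x : nat) = (P1 x : nat) + P2 x + P3 x) ->
  count P s = count P1 s + count P2 s + count P3 s.
Proof.
move=> h; elim: s => [|x s IH] //=; rewrite IH h.
by rewrite !addnA; lia.
Qed.

Ltac bnd := rewrite mem_box2 /=; lia.

Section Lat.
Variables (R : nat) (k : int).
Hypothesis hR : 12 * `|k| + 12 <= R%:Z.

Lemma cA_split : cA R k = (cAr R k 1%R + cAr R k 3%R + cAr R k 5%R)%N.
Proof.
apply: count_sum3 => [[x y]]; rewrite /oddz /=.
case: (nA (x, y) == k) => //=; lia.
Qed.

Lemma cB'_split : cB' R k = (cC R k 2%R + cC R k 6%R + cC R k 10%R)%N.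
Proof.
apply: count_sum3 => [[x y]]; rewrite /oddz /=.
case: (nA (x, y) == 4 * k) => //=; lia.
Qed.

Lemma cA15 : cAr R k 1 = cAr R k 5.
Proof.
apply: (@count_bij _ _ _ _ _ _ (fun z => (- z.1, - z.2)) (fun z => (- z.1, - z.2)));
  rewrite ?uniq_box2 // => [[x y]]; rewrite /nA /= => hb /= /andP[/eqP e m];
  (have h1 := le_sq' x); (have h2 := le_sq' y);
  (split; [bnd | apply/andP; split; [apply/eqP; rewrite -e; ring | lia] | congr pair; lia]).
Qed.

Lemma cC2_10 : cC R k 2 = cC R k 10.
Proof.
apply: (@count_bij _ _ _ _ _ _ (fun z => (- z.1, - z.2)) (fun z => (- z.1, - z.2)));
  rewrite ?uniq_box2 // => [[x y]]; rewrite /nA /oddz /= => hb /= /andP[/andP[/eqP e o] m];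
  (have h1 := le_sq' x); (have h2 := le_sq' y);
  (split; [bnd | apply/andP; split; [apply/andP; split; [apply/eqP; rewrite -e; ring | lia] | lia] | congr pair; lia]).
Qed.

Lemma cA3_C6 : cAr R k 3 = cC R k 6.
Proof.
apply: (@count_bij _ _ _ _ _ _
   (fun z => let s := ((z.1 + z.2) %/ 3)%Z in (5 * s + 2 * z.2, s - 2 * z.2))
   (fun z => let s := ((z.1 + z.2) %/ 6)%Z in let y := ((s - z.2) %/ 2)%Z in (3 * s - y, y)));
  rewrite ?uniq_box2 //.
- move=> [x y] hb /= /andP[/eqP e m] /=.
  set s := ((x + y) %/ 3)%Z.
  have hs : x + y = 3 * s by rewrite /s; lia.
  clearbody s.
  have hx : x = 3 * s - y by lia.
  have E : nA (5 * s + 2 * y, s - 2 * y) = 4 * k by rewrite -e hx /nA /=; ring.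
  move: E; rewrite /nA /= => E.
  have h1 := le_sq' (5 * s + 2 * y); have h2 := le_sq' (s - 2 * y).
  split; [bnd | rewrite /nA /oddz /= E eqxx /=; lia | congr pair; lia].
- move=> [p r] hb /= /andP[/andP[/eqP e o] m] /=.
  set s := ((p + r) %/ 6)%Z.
  have hs : p + r = 6 * s by rewrite /s /oddz in o *; lia.
  clearbody s.
  set y := ((s - r) %/ 2)%Z.
  have hy : s - r = 2 * y by rewrite /y /oddz in o *; lia.
  clearbody y.
  have hp : p = 5 * s + 2 * y by lia.
  have hr : r = s - 2 * y by lia.
  have E : 4 * nA (3 * s - y, y) = 4 * k by rewrite -e hp hr /nA /=; ring.
  have E' : nA (3 * s - y, y) = k by lia.
  move: E'; rewrite /nA /= => E'.
  have h1 := le_sq' (3 * s - y); have h2 := le_sq' y.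
  split; [bnd | rewrite /nA /= E' eqxx /=; rewrite /oddz in o; lia | congr pair; lia].
Qed.

Lemma cSe_A1 : cSe R (k - 1) = cAr R k 1.
Proof.
apply: (@count_bij _ _ _ _ _ _
   (fun z => let y := ((z.2 - z.1) %/ 2)%Z in (6 * z.2 + 1 - y, y))
   (fun z => let b := ((z.1 + z.2 - 1) %/ 6)%Z in (b - 2 * z.2, b)));
  rewrite ?uniq_box2 //.
- move=> [a b] hb /= /andP[/eqP e m] /=; rewrite /oddz negbK in m.
  set y := ((b - a) %/ 2)%Z.
  have hy : b - a = 2 * y by rewrite /y; lia.
  clearbody y.
  have ha : a = b - 2 * y by lia.
  have E : nA (6 * b + 1 - y, y) = k.
    have -> : k = (k - 1) + 1 by ring.
    by rewrite -e ha /nA /nS /om /=; ring.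
  move: E; rewrite /nA /= => E.
  have h1 := le_sq' (6 * b + 1 - y); have h2 := le_sq' y.
  split; [bnd | rewrite /nA /= E eqxx /=; lia | congr pair; lia].
- move=> [x y] hb /= /andP[/eqP e m] /=.
  set b := ((x + y - 1) %/ 6)%Z.
  have hs : x + y = 6 * b + 1 by rewrite /b; lia.
  clearbody b.
  have hx : x = 6 * b + 1 - y by lia.
  have E : nS (b - 2 * y, b) = k - 1 by rewrite -e hx /nA /nS /om /=; ring.
  move: E; rewrite /nS /om /= => E.
  have h1 := le_om (b - 2 * y); have h2 := le_om b.
  split; [bnd | rewrite /nS /om /= E eqxx /= /oddz; lia | congr pair; lia].
Qed.

Lemma cSo_C2 : cSo R (k - 1) = cC R k 2.
Proof.
apply: (@count_bij _ _ _ _ _ _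
   (fun z => (11 * z.2 + z.1 + 2, z.2 - z.1))
   (fun z => let b := ((z.1 + z.2 - 2) %/ 12)%Z in (b - z.2, b)));
  rewrite ?uniq_box2 //.
- move=> [a b] hb /= /andP[/eqP e m] /=; rewrite /oddz in m.
  have E : nA (11 * b + a + 2, b - a) = 4 * k.
    have -> : k = (k - 1) + 1 by ring.
    by rewrite -e /nA /nS /om /=; ring.
  move: E; rewrite /nA /= => E.
  have h1 := le_sq' (11 * b + a + 2); have h2 := le_sq' (b - a).
  split; [bnd | rewrite /nA /= E eqxx /= /oddz; lia | congr pair; lia].
- move=> [p r] hb /= /andP[/andP[/eqP e o] m] /=; rewrite /oddz in o.
  set b := ((p + r - 2) %/ 12)%Z.
  have hs : p + r = 12 * b + 2 by rewrite /b; lia.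
  clearbody b.
  have hp : p = 11 * b + (b - r) + 2 by lia.
  have E : 4 * (nS (b - r, b) + 1) = 4 * k by rewrite -e hp /nA /nS /om /=; ring.
  have E' : nS (b - r, b) = k - 1 by lia.
  move: E'; rewrite /nS /om /= => E'.
  have h1 := le_om (b - r); have h2 := le_om b.
  split; [bnd | rewrite /nS /om /= E' eqxx /= /oddz; lia | congr pair; lia].
Qed.

Lemma cB_B' : cB R k = cB' R k.
Proof.
apply: (@count_bij _ _ _ _ _ _
   (fun z => (2 * z.1 - 1, 1 - 2 * z.2))
   (fun z => (((z.1 + 1) %/ 2)%Z, ((1 - z.2) %/ 2)%Z)));
  rewrite ?uniq_box2 //.
- move=> [a b] hb /= /andP[/eqP e m] /=; rewrite /oddz in m.
  have E : nA (2 * a - 1, 1 - 2 * b) = 4 * k by rewrite -e /nA /=; ring.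
  move: E; rewrite /nA /= => E.
  have h1 := le_sq' (2 * a - 1); have h2 := le_sq' (1 - 2 * b).
  split; [bnd | rewrite /nA /= E eqxx /= /oddz; lia | congr pair; lia].
- move=> [p r] hb /= /andP[/andP[/eqP e o] m] /=; rewrite /oddz in o.
  set a := ((p + 1) %/ 2)%Z.
  have ha : p = 2 * a - 1 by rewrite /a; lia.
  clearbody a.
  set b := ((1 - r) %/ 2)%Z.
  have hb' : r = 1 - 2 * b by rewrite /b; lia.
  clearbody b.
  have E : 4 * (a * (a - 1) + 11 * (b * (b - 1)) + 3) = 4 * k
    by rewrite -e ha hb' /nA /=; ring.
  have E' : a * (a - 1) + 11 * (b * (b - 1)) + 3 = k by lia.
  have [h1 h2] := le_e a; have [h3 h4] := le_e b.
  split; [bnd | rewrite E' eqxx /= /oddz; lia | congr pair; lia].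
Qed.

Lemma lattice : (cA R k)%:Z - (cB R k)%:Z = 2 * ((cSe R (k - 1))%:Z - (cSo R (k - 1))%:Z).
Proof.
rewrite cA_split cB_B' cB'_split -cA15 -cC2_10 cA3_C6 cSe_A1 cSo_C2.
lia.
Qed.
End Lat.

Local Close Scope ring_scope.

Definition pos (y : nat) : bool := (0 < y)%N.

Lemma geq_trans' : transitive (T := nat) geq.
Proof. move=> a b c h1 h2; exact: leq_trans h2 h1. Qed.

Lemma part_cons h l : is_partition (h :: l) =
  [&& (0 < h)%N, all (fun y => (y <= h)%N) l & is_partition l].
Proof.
rewrite /is_partition /= path_sortedE; last exact: geq_trans'.
by case: (0 < h)%N; case: (all _ l); case: (sorted _ l); case: (all _ l).
Qed.

Lemma part_nil : is_partition [::]. Proof. by []. Qed.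

Lemma sumn_predn l : all pos l -> (sumn (map predn l) + size l)%N = sumn l.
Proof. elim: l => [|x l IH] //= /andP[hx hl]; rewrite -(IH hl) /pos in hx *; lia. Qed.

Lemma sumn_filter_pos s : sumn (filter pos s) = sumn s.
Proof. elim: s => [|x s IH] //=; rewrite /pos; case: x => [|x] /=; by rewrite IH ?add0n. Qed.

Lemma sumn_succn l : sumn (map succn l) = (sumn l + size l)%N.
Proof. elim: l => [|x l IH] //=; rewrite IH; lia. Qed.

Lemma filter_pos_predn l : all pos l ->
  filter pos (map predn l) = map predn (filter (fun y => 1 < y)%N l).
Proof.
elim: l => [|x l IH] //= /andP[hx hl]; rewrite /pos in hx.
case: x hx => [|[|x]] //= _; rewrite IH //.
Qed.

Lemma succ_predn l : all (fun y => 1 < y)%N l -> map succn (map predn l) = l.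
Proof. elim: l => [|x l IH] //= /andP[hx hl]; by rewrite IH //; case: x hx => [|[|x]]. Qed.

Lemma all_filter_gt1 l : all (fun y => 1 < y)%N (filter (fun y => 1 < y)%N l).
Proof. by rewrite all_filter; apply/allP => x _; apply/implyP. Qed.

Lemma ones_nseq l : all (fun y => (0 < y <= 1)%N) l -> l = nseq (size l) 1%N.
Proof. elim: l => [|x l IH] //= /andP[hx hl]; rewrite -IH //; congr cons; lia. Qed.

Lemma part_split l : is_partition l ->
  l = filter (fun y => 1 < y)%N l ++ nseq (count (pred1 1%N) l) 1%N.
Proof.
elim: l => [|h l IH] //; rewrite part_cons => /and3P[hh hl pl].
case: (ltnP 1 h) => h1 /=.
  have e1 : (h == 1) = false by apply/negbTE; lia.
  by rewrite h1 e1 add0n /= -IH.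
have eh : h = 1%N by lia.
subst h; rewrite /= (_ : filter _ l = [::]); last first.
  apply/eqP; rewrite -[_ == _]negbK -has_filter; apply/hasPn => x xl.
  by move/allP: hl => /(_ x xl); lia.
rewrite /= add0n; congr cons.
have ho : all (fun y => (0 < y <= 1)%N) l.
  apply/allP => x xl; move/allP: hl => /(_ x xl); move: pl => /andP[_ /allP /(_ x xl)].
  rewrite /=; lia.
rewrite {1}(@ones_nseq l ho); congr nseq.
elim: l ho {IH hl pl} => [|x l IH] //= /andP[hx hl]; rewrite IH //; have -> : x = 1%N by lia.
by rewrite eqxx.
Qed.

Lemma size_split l : all pos l ->
  size l = (count (fun y => 1 < y)%N l + count (pred1 1%N) l)%N.
Proof. elim: l => [|x l IH] //= /andP[hx hl]; rewrite IH // /pos in hx *; case: x hx => [|[|x]] //= _; lia. Qed.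

Lemma sorted_ones m : sorted geq (nseq m 1%N).
Proof. by elim: m => [|[|m] IH] //=; rewrite leqnn. Qed.

Lemma part_app_ones s m : is_partition s -> is_partition (s ++ nseq m 1%N).
Proof.
elim: s => [|x s IH]; first by rewrite /= /is_partition sorted_ones all_nseq; case: m.
rewrite /= !part_cons => /and3P[hx hs ps]; rewrite hx all_cat hs IH // andbT /=.
by apply/allP => y /nseqP [-> _].
Qed.

Lemma part_succn l : is_partition l -> is_partition (map succn l).
Proof.
rewrite /is_partition => /andP[s _]; rewrite all_map.
apply/andP; split; last by apply/allP.
apply: (homo_sorted _ _ s) => a b /=; by rewrite ltnS.
Qed.

Lemma part_filter s : sorted geq s -> is_partition (filter pos s).
Proof.
move=> ss; rewrite /is_partition sorted_filter //; last exact: geq_trans'.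
by rewrite filter_all.
Qed.

Lemma sorted_predn c h l : (predn h <= c)%N -> is_partition (h :: l) ->
  sorted geq (c :: map predn (h :: l)).
Proof.
move=> hc /andP[s _]; rewrite /= hc /=.
apply: (homo_sorted (f := predn) (e := geq) (e' := geq) _ _ s).
by move=> a b /=; case: a; case: b => //= a b; rewrite ltnS.
Qed.

Definition bz (x : int * seq nat) : int * seq nat :=
  let: (j, l) := x in
  if l is h :: l' then
    if (h%:Z <= (size l)%:Z + 3 * j)%R then
      (j - 1, filter pos (absz ((size l)%:Z + 3 * j - 1)%R :: map predn l))%R
    else (j + 1, map succn l' ++ nseq (absz (h%:Z - (size l)%:Z - 3 * j - 1)%R) 1%N)%R
  else if (j < 0)%R then (j + 1, nseq (absz (- (3 * j) - 2)%R) 1%N)%R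
       else (j - 1, [:: absz (3 * j - 1)%R])%R.

Definition wt (x : int * seq nat) : int := (2 * (sumn x.2)%:Z + x.1 * (3 * x.1 + 1))%R.

Local Open Scope ring_scope.

Lemma part_pos l : is_partition l -> all pos l.
Proof. by case/andP. Qed.

Lemma part_le_head h l : is_partition (h :: l) -> all (fun y => y <= h)%N l.
Proof. by rewrite part_cons => /and3P[]. Qed.

Arguments part_pos {l}. Arguments sumn_predn {l}. Arguments size_split {l}.
Arguments part_le_head {h l}. Arguments ones_nseq {l}. Arguments part_split {l}.
Arguments filter_pos_predn {l}.

Lemma bz_case1 j h l' : let l := h :: l' in is_partition l ->
  h%:Z <= (size l)%:Z + 3 * j ->
  [/\ is_partition (bz (j, l)).2, wt (bz (j, l)) = wt (j, l),
      (bz (j, l)).1 = j - 1 & bz (bz (j, l)) = (j, l)].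
Proof.
move=> l pl hc.
set c := absz ((size l)%:Z + 3 * j - 1)%R.
have hh : (0 < h)%N by move: pl; rewrite part_cons => /and3P[].
have hcz : c%:Z = (size l)%:Z + 3 * j - 1 by rewrite /c; lia.
have E : bz (j, l) = (j - 1, filter pos (c :: map predn l)) by rewrite /= hc.
have pl' : is_partition (h :: l') by [].
have El : l = h :: l' by [].
clearbody l.
rewrite E; split => //.
- by apply: part_filter; rewrite El; apply: sorted_predn => //; lia.
- rewrite /wt; cbn [fst snd]; rewrite sumn_filter_pos.
  have -> : sumn (c :: map predn l) = (c + sumn (map predn l))%N by [].
  have := sumn_predn (part_pos pl); move: (sumn (map predn l)) => s' hs.
  move: (sumn l) hs => s hs; rewrite -hs; nia.
have fm : filter pos (map predn l) = map predn (filter (fun y => 1 < y)%N l)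
  by apply: filter_pos_predn; exact: part_pos.
have hcnt := count_size (fun y => 1 < y)%N l.
have hsz := size_split (part_pos pl).
case: (posnP c) => [c0|cpos].
-
  have h1 : h = 1%N by lia.
  have ones : all (fun y => (0 < y <= 1)%N) l.
    apply/allP => y yl; move: (part_pos pl) => /allP /(_ y yl); rewrite /pos.
    move: yl; rewrite El inE => /orP[/eqP -> | yl']; first by lia.
    by move: (part_le_head pl') => /allP /(_ y yl'); lia.
  have lo := ones_nseq ones.
  have -> : filter pos (c :: map predn l) = [::].
    rewrite c0 /= lo; move: (size l) => n; by elim: n.
  have jneg : j - 1 < 0 by lia.
  rewrite /= jneg; congr pair; first by ring.
  rewrite [RHS]lo; congr nseq; lia.
- have -> : filter pos (c :: map predn l) = c :: map predn (filter (fun y => 1 < y)%N l).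
    by rewrite -fm /= /pos cpos.
  rewrite /= size_map size_filter.
  have -> : (c%:Z <= (count (fun y => 1 < y)%N l).+1%:Z + 3 * (j - 1)) = false by lia.
  congr pair; first by ring.
  rewrite succ_predn ?all_filter_gt1 //.
  rewrite [RHS](part_split pl); congr (_ ++ nseq _ _); lia.
Qed.

Lemma bz_case2 j h l' : let l := h :: l' in is_partition l ->
  ~~ (h%:Z <= (size l)%:Z + 3 * j) ->
  [/\ is_partition (bz (j, l)).2, wt (bz (j, l)) = wt (j, l),
      (bz (j, l)).1 = j + 1 & bz (bz (j, l)) = (j, l)].
Proof.
move=> l pl hc.
set m := absz (h%:Z - (size l)%:Z - 3 * j - 1)%R.
have hmz : m%:Z = h%:Z - (size l)%:Z - 3 * j - 1 by rewrite /m; lia.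
have E : bz (j, l) = (j + 1, map succn l' ++ nseq m 1%N) by rewrite /= (negbTE hc).
have pl' : is_partition (h :: l') by [].
have El : l = h :: l' by [].
clearbody l.
have hh : (0 < h)%N by move: pl'; rewrite part_cons => /and3P[].
have hle := part_le_head pl'.
have pl'' : is_partition l' by move: pl'; rewrite part_cons => /and3P[].
have szl : size l = (size l').+1 by rewrite El.
rewrite E; split => //.
- by apply: part_app_ones; apply: part_succn.
- rewrite /wt; cbn [fst snd]; rewrite sumn_cat sumn_succn sumn_nseq El /=.
  rewrite szl in hmz; nia.
set nu := map succn l' ++ nseq m 1%N.
have Pnu : map predn nu = l' ++ nseq m 0%N.
  by rewrite /nu map_cat map_nseq -map_comp map_id_in //.
have szn : size nu = (size l' + m)%N by rewrite /nu size_cat size_map size_nseq.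
have bnu : all (fun y => y <= h.+1)%N nu.
  rewrite /nu all_cat all_map all_nseq; apply/andP; split.
    by apply/allP => y /(allP hle) /=.
  by case: m {hmz E nu Pnu szn}.
case Ev : nu => [|y nu'].
- have : size nu = 0%N by rewrite Ev.
  rewrite szn => /eqP; rewrite addn_eq0 => /andP[/eqP s0 /eqP m0].
  have l0 : l' = [::] by apply/size0nil.
  rewrite l0 in szl El; rewrite szl m0 /= in hmz.
  rewrite /= (_ : (j + 1 < 0) = false); last by lia.
  rewrite El; congr pair; first by ring.
  congr cons; lia.
- rewrite -Ev.
  have hy : (y <= h.+1)%N by move: bnu; rewrite Ev /= => /andP[].
  rewrite /bz Ev -Ev szn.
  have -> : (y%:Z <= (size l' + m)%N%:Z + 3 * (j + 1)) = true by rewrite szl in hmz; lia.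
  congr pair; first by ring.
  rewrite Pnu.
  have -> : absz ((size l' + m)%N%:Z + 3 * (j + 1) - 1)%R = h by rewrite szl in hmz; lia.
  rewrite El /= {1}/pos hh filter_cat filter_nseq /=.
  by rewrite cats0; congr cons; apply/all_filterP; apply: part_pos.
Qed.

Lemma bz_nil j : j != 0 ->
  [/\ is_partition (bz (j, [::])).2, wt (bz (j, [::])) = wt (j, [::]),
      (bz (j, [::])).1 = (if j < 0 then j + 1 else j - 1) & bz (bz (j, [::])) = (j, [::])].
Proof.
move=> j0; case: (ltrP j 0) => hj.
- set n := absz (- (3 * j) - 2)%R.
  have hn : n%:Z = - (3 * j) - 2 by rewrite /n; lia.
  have E : bz (j, [::]) = (j + 1, nseq n 1%N) by rewrite /= hj.
  rewrite E; split => //.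
  - by apply: part_app_ones (part_nil).
  - rewrite /wt /= sumn_nseq; nia.
  case En : n hn => [|n'] hn; first by lia.
  rewrite /=.
  rewrite size_nseq.
  have -> : (1%:Z <= (n'.+1)%:Z + 3 * (j + 1)) = true by lia.
  congr pair; first by ring.
  have -> : absz ((n'.+1)%:Z + 3 * (j + 1) - 1)%R = 0%N by lia.
  by rewrite /= map_nseq filter_nseq.
- set c := absz (3 * j - 1)%R.
  have hn : c%:Z = 3 * j - 1 by rewrite /c; lia.
  have E : bz (j, [::]) = (j - 1, [:: c]).
    by rewrite /= (_ : (j < 0) = false) //; lia.
  rewrite E; split => //.
  - by rewrite /is_partition /= andbT /pos; lia.
  - rewrite /wt /=; nia.
  rewrite /=.
  have -> : (c%:Z <= 1%:Z + 3 * (j - 1)) = false by lia.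
  congr pair; first by ring.
  have -> : absz (c%:Z - 1%:Z - 3 * (j - 1) - 1)%R = 0%N by lia.
  by [].
Qed.

Lemma bz_ok x : is_partition x.2 -> x != (0, [::]) ->
  [/\ is_partition (bz x).2, wt (bz x) = wt x, oddz (bz x).1 = ~~ oddz x.1 & bz (bz x) = x].
Proof.
case: x => j [|h l'] pl hx.
- have j0 : j != 0 by apply: contraNneq hx => ->.
  have [a b c d] := bz_nil j j0; split => //; rewrite c /oddz /=; case: ifP => _; lia.
- case: (boolP (h%:Z <= (size (h :: l'))%:Z + 3 * j)) => hc.
    have [a b c d] := bz_case1 j h l' pl hc; split => //; rewrite c /oddz /=; lia.
  have [a b c d] := bz_case2 j h l' pl hc; split => //; rewrite c /oddz /=; lia.
Qed.

Local Close Scope ring_scope.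

Fixpoint lsts (n K : nat) : seq (seq nat) :=
  if n is n'.+1 then [::] :: [seq x :: s | x <- iota 1 K, s <- lsts n' K] else [:: [::]].

Lemma mem_lsts n K s : (s \in lsts n K) = (size s <= n) && all (fun x => 0 < x <= K) s.
Proof.
elim: n s => [|n IH] [|x s] //=.
rewrite in_cons /=; apply/allpairsP/idP.
  move=> [[a b] /= [ha hb [-> ->]]]; rewrite mem_iota in ha; rewrite IH in hb.
  move: hb => /andP[h1 h2]; rewrite h2 andbT ltnS h1 /=.
  by rewrite add1n ltnS in ha.
move=> /andP[hs /andP[hx ha]]; exists (x, s); split => //=.
  by rewrite mem_iota add1n ltnS.
by rewrite IH -ltnS hs ha.
Qed.

Lemma uniq_lsts n K : uniq (lsts n K).
Proof.
elim: n => [|n IH] //=; apply/andP; split.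
  by apply/allpairsP => [[[a b] [_ _ ]]].
apply: allpairs_uniq; rewrite ?iota_uniq //.
by move=> [a b] [c d] _ _ /= [-> ->].
Qed.

Definition PL K := filter (fun s => is_partition s && (sumn s <= K)) (lsts K K).

Lemma size_le_sumn s : all pos s -> size s <= sumn s.
Proof. elim: s => [|x s IH] //= /andP[hx hs]; have := IH hs; rewrite /pos in hx; lia. Qed.

Lemma mem_le_sumn s x : x \in s -> x <= sumn s.
Proof. elim: s => [|y s IH] //=; rewrite inE => /orP[/eqP ->|/IH]; lia. Qed.

Arguments size_le_sumn {s}. Arguments mem_le_sumn {s x}.

Lemma mem_PL K s : (s \in PL K) = is_partition s && (sumn s <= K).
Proof.
rewrite mem_filter mem_lsts; case ps: (is_partition s); case hs: (sumn s <= K) => //=.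
apply/andP; split.
  by have := size_le_sumn (part_pos ps); lia.
apply/allP => x xs; move/allP: (part_pos ps) => /(_ x xs); rewrite /pos.
by have := mem_le_sumn xs; lia.
Qed.

Lemma uniq_PL K : uniq (PL K).
Proof. by rewrite filter_uniq // uniq_lsts. Qed.

Definition XL R K := [seq (j, l) | j <- zr R, l <- PL K].

Lemma mem_XL R K x : (x \in XL R K) = (x.1 \in zr R) && (x.2 \in PL K).
Proof.
apply/allpairsP/idP.
  by move=> [[a b] /= [ha hb ->]]; rewrite ha hb.
case: x => a b /andP[ha hb]; exists (a, b) => //.
Qed.

Lemma uniq_XL R K : uniq (XL R K).
Proof.
apply: allpairs_uniq; rewrite ?uniq_zr ?uniq_PL //.
by move=> [a b] [c d] _ _ /= [-> ->].
Qed.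

Local Open Scope ring_scope.

Lemma inXL R K T x : is_partition x.2 -> wt x = T -> T <= 2 * K%:Z -> 2 * K%:Z <= R%:Z ->
  x \in XL R K.
Proof.
case: x => j l /= pl; rewrite /wt /= => w hT hR.
have := le_om j; rewrite /om => hj.
rewrite mem_XL /= mem_zr mem_PL pl /=.
apply/andP; split; [apply/andP; split|]; lia.
Qed.

Lemma wt0 x : is_partition x.2 -> wt x = 0 -> x = (0, [::]).
Proof.
case: x => j l /= pl; rewrite /wt /= => h; have := le_om j; rewrite /om => hj.
have j0 : j = 0 by lia.
have s0 : sumn l = 0%N by lia.
subst j; congr pair; apply: size0nil; have := size_le_sumn (part_pos pl); lia.
Qed.

Arguments wt0 {x}. Arguments inXL {R K T x}. Arguments bz_ok {x}.

Lemma euler R K T : T <= 2 * K%:Z -> 2 * K%:Z <= R%:Z ->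
  (count (fun x => (wt x == T) && ~~ oddz x.1) (XL R K))%:Z
  - (count (fun x => (wt x == T) && oddz x.1) (XL R K))%:Z = (T == 0)%:Z.
Proof.
move=> hT hR.
case: (eqVneq T 0) => [->|T0].
- have -> : count (fun x => (wt x == 0) && oddz x.1) (XL R K) = 0%N.
    apply/eqP; rewrite -leqn0 leqNgt -has_count; apply/hasPn => x xX.
    rewrite mem_XL mem_PL in xX; case/andP: xX => _ /andP[px _].
    apply/negP => /andP[/eqP w o]; move: o; rewrite (wt0 px w) /oddz /=.
    by [].
  rewrite (@eq_in_count _ _ (pred1 (0, [::]))) ?count_uniq_mem ?uniq_XL //.
    rewrite mem_XL mem_zr mem_PL /=; lia.
  move=> x xX /=; rewrite mem_XL mem_PL in xX; case/andP: xX => _ /andP[px _].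
  apply/idP/eqP.
    by move=> /andP[/eqP w _]; apply: wt0.
  by move=> ->.
rewrite (@count_bij _ _ (XL R K) (XL R K) _ (fun x => (wt x == T) && oddz x.1) bz bz) ?uniq_XL //.
- by rewrite subrr.
- move=> x xX /andP[/eqP w o]; rewrite mem_XL mem_PL in xX.
  case/andP: xX => _ /andP[px _].
  have xn : x != (0, [::]) by apply: contra_neq T0 => ex; rewrite -w ex.
  have [a b c d] := bz_ok px xn.
  split => //; first exact: (inXL a (etrans b w)).
  by rewrite b w eqxx c.
- move=> x xX /andP[/eqP w o]; rewrite mem_XL mem_PL in xX.
  case/andP: xX => _ /andP[px _].
  have xn : x != (0, [::]) by apply: contra_neq T0 => ex; rewrite -w ex.
  have [a b c d] := bz_ok px xn.
  split => //; first exact: (inXL a (etrans b w)).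
  by rewrite b w eqxx c o.
Qed.


Lemma sig_eq (A : Type) (P : A -> Prop) (x y : {a | P a}) : proj1_sig x = proj1_sig y -> x = y.
Proof. case: x => a pa; case: y => b pb /= e; subst b; f_equal; apply: proof_irrelevance. Qed.

Lemma bij_of_lists (T : eqType) (P Q : T -> Prop) (s t : seq T) :
  uniq s -> uniq t -> (forall x, P x <-> x \in s) -> (forall y, Q y <-> y \in t) ->
  size s = size t ->
  exists f : {x | P x} -> {y | Q y}, bijective f.
Proof.
move=> us ut hP hQ st.
have hf (x : {x | P x}) : Q (nth (proj1_sig x) t (index (proj1_sig x) s)).
  apply/hQ; apply: mem_nth; rewrite -st index_mem; apply/hP; exact: proj2_sig.
have hg (y : {y | Q y}) : P (nth (proj1_sig y) s (index (proj1_sig y) t)).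
  apply/hP; apply: mem_nth; rewrite st index_mem; apply/hQ; exact: proj2_sig.
exists (fun x => exist Q _ (hf x)); exists (fun y => exist P _ (hg y)).
- move=> x; apply: sig_eq => /=.
  have xs : proj1_sig x \in s by apply/hP; exact: proj2_sig.
  rewrite index_uniq //; last by rewrite -st index_mem.
  exact: nth_index.
- move=> y; apply: sig_eq => /=.
  have yt : proj1_sig y \in t by apply/hQ; exact: proj2_sig.
  rewrite index_uniq //; last by rewrite st index_mem.
  exact: nth_index.
Qed.

Local Open Scope ring_scope.

Definition sg (a : int) : int := if oddz a then -1 else 1.

Lemma sgD a b : sg (a + b) = sg a * sg b.
Proof. rewrite /sg /oddz; case: ifP => h1; case: ifP => h2; case: ifP => h3; lia. Qed.

Lemma sum_sg (T : eqType) (s : seq T) (P : pred T) (j : T -> int) :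
  \sum_(x <- s) sg (j x) * (P x)%:Z =
  (count (fun x => P x && ~~ oddz (j x)) s)%:Z - (count (fun x => P x && oddz (j x)) s)%:Z.
Proof.
elim: s => [|x s IH]; first by rewrite big_nil.
rewrite big_cons IH /= /sg; case: (P x); case: (oddz (j x)) => /=; lia.
Qed.

Lemma count_sumz (T : Type) (s : seq T) (P : pred T) :
  (count P s)%:Z = \sum_(x <- s) (P x)%:Z.
Proof. elim: s => [|x s IH]; rewrite ?big_nil ?big_cons //= PoszD IH; congr (_ + _). Qed.

Lemma euler_sum R K T : T <= 2 * K%:Z -> 2 * K%:Z <= R%:Z ->
  \sum_(x <- XL R K) sg x.1 * (wt x == T)%:Z = (T == 0)%:Z.
Proof. by move=> h1 h2; rewrite (sum_sg _ _ (fun x => wt x == T) (fun x => x.1)); apply: euler. Qed.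

Lemma cS_sum R j : (cSe R j)%:Z - (cSo R j)%:Z =
  \sum_(z <- box2 R) sg (z.1 + z.2) * (nS z == j)%:Z.
Proof. by rewrite (sum_sg _ _ (fun z => nS z == j) (fun z => z.1 + z.2)). Qed.

Lemma wt_ge0 x : 0 <= wt x.
Proof. case: x => j l; rewrite /wt /=; have := le_om j; lia. Qed.

Lemma b2 d : 2 * binom2 d = d * (d - 1).
Proof.
rewrite /binom2; have: (2 %| d * (d-1))%Z.
  have [q [hq|hq]] : exists q, d = 2 * q \/ d = 2*q+1 by exists (d %/ 2)%Z; lia.
  - rewrite hq; apply/dvdzP; exists (q * (2*q-1)); ring.
  - rewrite hq; apply/dvdzP; exists ((2*q+1) * q); ring.
move=> /dvdzP [c ->]; rewrite mulzK //; ring.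
Qed.

Definition PP K := [seq (a, b) | a <- PL K, b <- PL K].

Lemma mem_PP K m : (m \in PP K) = (m.1 \in PL K) && (m.2 \in PL K).
Proof.
apply/allpairsP/idP.
  by move=> [[a b] /= [ha hb ->]]; rewrite ha hb.
case: m => a b /andP[ha hb]; exists (a, b) => //.
Qed.

Lemma uniq_PP K : uniq (PP K).
Proof. by apply: allpairs_uniq; rewrite ?uniq_PL // => [[a b] [c d]] _ _ /= [-> ->]. Qed.

Definition tup (m : seq nat * seq nat) (d : int * int) : seq nat * seq nat * int * int :=
  (m.1, m.2, d.1, d.2).

Definition U K R := [seq tup m d | m <- PP K, d <- box2 R].

Lemma mem_U K R a b c d : ((a, b, c, d) \in U K R) =
  [&& a \in PL K, b \in PL K & (c, d) \in box2 R].
Proof.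
apply/allpairsP/idP.
  move=> [[m z] /= [hm hz]]; rewrite /tup => [[-> -> -> ->]].
  by rewrite mem_PP in hm; case/andP: hm => -> ->; case: z hz.
move=> /and3P[ha hb hz]; exists ((a, b), (c, d)); split => //.
by rewrite mem_PP ha hb.
Qed.

Lemma uniq_U K R : uniq (U K R).
Proof.
apply: allpairs_uniq; rewrite ?uniq_PP ?uniq_box2 //.
by move=> [[a b] [c d]] [[a' b'] [c' d']] _ _; rewrite /tup /= => [[-> -> -> ->]].
Qed.

Definition LHSb (N : int) (x : seq nat * seq nat * int * int) : bool :=
  let: (mu1, mu2, d1, d2) := x in
  [&& is_partition mu1, is_partition mu2, ~~ (2 %| d1 + d2)%Z &
      2 * (psize mu1)%:Z + 22 * (psize mu2)%:Z + 2 * binom2 d1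
        + 22 * binom2 d2 + d1 + 11 * d2 == N].

Definition RHSb (N : int) (x : seq nat * seq nat * int * int) : bool :=
  let: (a1, a2, e1, e2) := x in
  [&& is_partition a1, is_partition a2, ~~ (2 %| e1 + e2)%Z &
      2 * (psize a1)%:Z + 22 * (psize a2)%:Z + 2 * binom2 e1
        + 22 * binom2 e2 + 3 == N].

Lemma LHSP N x : LHS_set N x <-> LHSb N x.
Proof.
case: x => [[[a b] c] d] /=; split.
  by case=> -> -> -> /eqP ->.
by case/and4P => h1 h2 h3 /eqP h4.
Qed.

Lemma RHSP N x : RHS_set N x <-> RHSb N x.
Proof.
case: x => [[[a b] c] d] /=; split.
  by case=> -> -> -> /eqP ->.
by case/and4P => h1 h2 h3 /eqP h4.
Qed.

Definition kk (N : int) (m : seq nat * seq nat) : int :=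
  N - 2 * (sumn m.1)%:Z - 22 * (sumn m.2)%:Z.

Lemma countL N n R : (count (LHSb N) (U n R))%:Z = \sum_(m <- PP n) (cA R (kk N m))%:Z.
Proof.
rewrite count_sumz /U big_allpairs_dep /=.
apply: eq_big_seq => m; rewrite mem_PP => /andP[h1 h2].
rewrite /cA count_sumz; apply: eq_big_seq => [[c d]] _ /=.
case: m h1 h2 => a b /=; rewrite !mem_PL => /andP[pa _] /andP[pb _].
rewrite /tup /= pa pb /nA /oddz /psize /kk /=.
have := b2 c; have := b2 d => e1 e2.
congr Posz; congr nat_of_bool; lia.
Qed.

Lemma countR N n R : (count (RHSb N) (U n R))%:Z = \sum_(m <- PP n) (cB R (kk N m))%:Z.
Proof.
rewrite count_sumz /U big_allpairs_dep /=.
apply: eq_big_seq => m; rewrite mem_PP => /andP[h1 h2].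
rewrite /cB count_sumz; apply: eq_big_seq => [[c d]] _ /=.
case: m h1 h2 => a b /=; rewrite !mem_PL => /andP[pa _] /andP[pb _].
rewrite /tup /= pa pb /oddz /psize /kk /=.
have := b2 c; have := b2 d => e1 e2.
congr Posz; congr nat_of_bool; lia.
Qed.

Section Main.
Variables (N : int) (n R : nat).
Hypothesis hN : 3 <= N.
Hypothesis hn : N = n%:Z.
Hypothesis hR : R = (400 * n + 400)%N.

Definition Fq (a b : int) (m1 m2 : seq nat) : int :=
  sg a * sg b * (wt (a, m1) + 11 * wt (b, m2) == N - 1)%:Z.

Lemma S1_eq : \sum_(m <- PP n) \sum_(z <- box2 R) sg (z.1 + z.2) * (nS z == kk N m - 1)%:Z =
  \sum_(a <- zr R) \sum_(m1 <- PL n) \sum_(b <- zr R) \sum_(m2 <- PL n) Fq a b m1 m2.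
Proof.
rewrite /PP big_allpairs.
transitivity (\sum_(m1 <- PL n) \sum_(m2 <- PL n) \sum_(a <- zr R) \sum_(b <- zr R) Fq a b m1 m2).
  apply: eq_bigr => m1 _; apply: eq_bigr => m2 _; rewrite /box2 big_allpairs.
  apply: eq_bigr => a _; apply: eq_bigr => b _; rewrite /Fq sgD /=.
  congr (_ * Posz (nat_of_bool _)); rewrite /nS /om /wt /kk /=; lia.
transitivity (\sum_(m1 <- PL n) \sum_(a <- zr R) \sum_(b <- zr R) \sum_(m2 <- PL n) Fq a b m1 m2).
  apply: eq_bigr => m1 _; rewrite exchange_big; apply: eq_bigr => a _; by rewrite exchange_big.
by rewrite exchange_big.
Qed.

Lemma inner w0 : 0 <= w0 ->
  \sum_(x2 <- XL R n) sg x2.1 * (w0 + 11 * wt x2 == N - 1)%:Z = (w0 == N - 1)%:Z.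
Proof.
move=> hw; case: (boolP (11 %| N - 1 - w0)%Z) => h.
- set T := ((N - 1 - w0) %/ 11)%Z.
  rewrite (eq_bigr (fun x2 => sg x2.1 * (wt x2 == T)%:Z)); last first.
    by move=> x2 _; congr (_ * Posz (nat_of_bool _)); rewrite /T; lia.
  rewrite euler_sum; [congr (Posz (nat_of_bool _)); rewrite /T; lia | rewrite /T; lia | lia].
- rewrite big1 => [|x2 _]; first by lia.
  have := wt_ge0 x2 => hx.
  have -> : (w0 + 11 * wt x2 == N - 1) = false by lia.
  by rewrite mulr0.
Qed.

Lemma S2_zero :
  \sum_(a <- zr R) \sum_(m1 <- PL n) \sum_(b <- zr R) \sum_(m2 <- PL n) Fq a b m1 m2 = 0.
Proof.
transitivity (\sum_(x1 <- XL R n) sg x1.1 * (wt x1 == N - 1)%:Z).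
  rewrite /XL big_allpairs; apply: eq_bigr => a _; apply: eq_bigr => m1 _.
  transitivity (sg a * \sum_(x2 <- XL R n) sg x2.1 * (wt (a, m1) + 11 * wt x2 == N - 1)%:Z).
    rewrite /XL big_allpairs mulr_sumr; apply: eq_bigr => b _.
    rewrite mulr_sumr; apply: eq_bigr => m2 _; rewrite /Fq /=; ring.
  by rewrite inner ?wt_ge0.
rewrite euler_sum; [ | lia | lia]; lia.
Qed.
End Main.

Lemma counts_eq N : 3 <= N ->
  count (LHSb N) (U (absz N) (400 * absz N + 400)) =
  count (RHSb N) (U (absz N) (400 * absz N + 400)).
Proof.
move=> hN; set n := absz N; set R := (400 * n + 400)%N.
have hn : N = n%:Z by rewrite /n; lia.
suff : (count (LHSb N) (U n R))%:Z - (count (RHSb N) (U n R))%:Z = 0 by lia.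
rewrite countL countR -sumrB.
transitivity (2 * \sum_(m <- PP n) \sum_(z <- box2 R) sg (z.1 + z.2) * (nS z == kk N m - 1)%:Z).
  rewrite mulr_sumr; apply: eq_big_seq => [[a b]]; rewrite mem_PP !mem_PL => /andP[/andP[_ h1] /andP[_ h2]].
  rewrite lattice ?cS_sum //.
  rewrite /kk /R /=; rewrite /= in h1 h2; clearbody n; lia.
rewrite (S1_eq N n R hN hn erefl) (S2_zero N n R hN hn erefl) mulr0 //.
Qed.

Lemma inU N x : 3 <= N -> LHSb N x || RHSb N x -> x \in U (absz N) (400 * absz N + 400).
Proof.
case: x => [[[a b] c] d] hN /=; rewrite mem_U mem_box2 !mem_PL /psize /=.
have := b2 c; have := b2 d; have := le_sq' c; have := le_sq' d.
have := le_e c; have := le_e d.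
move=> [e1 e2] [e3 e4] h1 h2 h3 h4 /orP[] /and4P[-> -> _ /eqP e] /=; lia.
Qed.

Theorem lemma3p12 (N : int) (hN : 3 <= N) :
  exists f : {x | LHS_set N x} -> {y | RHS_set N y}, bijective f.
Proof.
apply: (@bij_of_lists _ _ _ (filter (LHSb N) (U (absz N) (400 * absz N + 400)))
                              (filter (RHSb N) (U (absz N) (400 * absz N + 400)))).
- by rewrite filter_uniq // uniq_U.
- by rewrite filter_uniq // uniq_U.
- move=> x; rewrite mem_filter LHSP; split.
    by move=> h; rewrite h inU // h.
  by case/andP.
- move=> x; rewrite mem_filter RHSP; split.
    by move=> h; rewrite h inU // h orbT.
  by case/andP.
- by rewrite !size_filter counts_eq.
Qed.
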